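(* Let $k$ be a positive integer with $k\equiv0\pmod4$. Then $\Bbbk_{-1}[u,v]^{G_{1,k}}\cong\Bbbk[u,v]^{\frac1{2k}(1,k+1)}$; in particular it is a commutative cyclic quotient singularity.
   Context: $\Bbbk$ is algebraically closed of characteristic $0$; $\Bbbk_{-1}[u,v]=\Bbbk\langle u,v\rangle/(vu+uv)$; matrices $\begin{pmatrix}a&b\\c&d\end{pmatrix}$ act by $u\mapsto au+cv$, $v\mapsto bu+dv$. $G_{n,k}$ is generated by $\mathrm{diag}(\omega^{2k},\omega^{-2k})$ and $\begin{pmatrix}0&\omega^n\\\omega^n&0\end{pmatrix}$ for $\omega$ a primitive $(2nk)$th root of unity (so $G_{1,k}$ is cyclic, generated by the antidiagonal matrix with entries a primitive $2k$th root of unity). $\frac1m(1,b)$ is the cyclic group generated by $\mathrm{diag}(\omega_m,\omega_m^b)$ acting on the commutative polynomial ring $\Bbbk[u,v]$. *)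

(* Defs.v *)
From HB Require Import structures.
From mathcomp Require Import all_boot all_order all_algebra.
Set Implicit Arguments. Unset Strict Implicit. Unset Printing Implicit Defensive.
Import Order.TTheory GRing.Theory Num.Theory.
Local Open Scope ring_scope.

(* Both k_{-1}[u,v] and k[u,v] are modelled on the K-vector space
   {poly {poly K}}: p`_j is the coefficient of v^j (a polynomial in u),
   and (p`_j)`_i is the coefficient of the monomial u^i v^j.
   The commutative ring k[u,v] uses the usual product of {poly {poly K}};
   the skew ring k_{-1}[u,v] uses the twisted product [skew_mul] below,
   determined by (u^i v^j)(u^a v^b) = (-1)^(j a) u^(i+a) v^(j+b),
   i.e. by the relation v u = - u v. *)

Section Defs.
Variable K : fieldType.

Definition var_u : {poly {poly K}} := ('X : {poly K})%:P.
Definition var_v : {poly {poly K}} := 'X.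

Definition cst (c : K) : {poly {poly K}} := (c%:P)%:P.

Definition skew_mul (p q : {poly {poly K}}) : {poly {poly K}} :=
  \sum_(j < size p) \sum_(b < size q)
     ((p`_j * (q`_b \Po ((-1) ^+ j *: 'X))) %:P * 'X^(j + b)).

Definition comm_mul (p q : {poly {poly K}}) : {poly {poly K}} := p * q.

Definition mpow (mul : {poly {poly K}} -> {poly {poly K}} -> {poly {poly K}})
  (x : {poly {poly K}}) (n : nat) : {poly {poly K}} := iter n (mul x) 1.

(* The matrix (a b; c d) acts by u |-> a u + c v, v |-> b u + d v, extended
   multiplicatively (w.r.t. the given product) and linearly:
   u^i v^j |-> (a u + c v)^i (b u + d v)^j. *)
Definition mat_act (mul : {poly {poly K}} -> {poly {poly K}} -> {poly {poly K}})
  (A : 'M[K]_2) (p : {poly {poly K}}) : {poly {poly K}} :=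
  let U := cst (A ord0 ord0) * var_u + cst (A ord_max ord0) * var_v in
  let V := cst (A ord0 ord_max) * var_u + cst (A ord_max ord_max) * var_v in
  \sum_(j < size p) \sum_(i < size p`_j)
     (cst (p`_j)`_i * mul (mpow mul U i) (mpow mul V j)).

Definition in_gen (S : seq 'M[K]_2) (g : 'M[K]_2) : Prop :=
  exists l : seq 'M[K]_2,
    all (fun h => h \in S ++ map invmx S) l /\ g = foldr mulmx 1%:M l.

(* generators of G_{n,k}, given omega a primitive (2nk)-th root of unity *)
Definition G_gens (n k : nat) (w : K) : seq 'M[K]_2 :=
  [:: \matrix_(i < 2, j < 2)
        (if i == j then (if i == ord0 then w ^+ (2 * k) else (w ^+ (2 * k))^-1)
         else 0);
      \matrix_(i < 2, j < 2) (if i == j then 0 else w ^+ n)].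

(* generator of 1/m(1,b), given zeta a primitive m-th root of unity *)
Definition cyc_gens (b : nat) (z : K) : seq 'M[K]_2 :=
  [:: \matrix_(i < 2, j < 2)
        (if i == j then (if i == ord0 then z else z ^+ b) else 0)].

Definition is_invariant (mul : {poly {poly K}} -> {poly {poly K}} -> {poly {poly K}})
  (S : seq 'M[K]_2) (p : {poly {poly K}}) : Prop :=
  forall g, in_gen S g -> mat_act mul g p = p.

Definition alg_iso_on
  (mul1 mul2 : {poly {poly K}} -> {poly {poly K}} -> {poly {poly K}})
  (P Q : {poly {poly K}} -> Prop) (f : {poly {poly K}} -> {poly {poly K}}) : Prop :=
  [/\ (forall p, P p -> Q (f p)),
      (forall q, Q q -> exists2 p, P p & f p = q),
      (forall p p', P p -> P p' -> f p = f p' -> p = p')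
    & [/\ (forall p p', P p -> P p' -> f (p + p') = f p + f p'),
      (forall p p', P p -> P p' -> f (mul1 p p') = mul2 (f p) (f p')),
      (forall (c : K) p, P p -> f (cst c * p) = cst c * f p)
    & f 1 = 1]].

End Defs.

(* Main.v *)
Require Import Defs.
From HB Require Import structures.
From mathcomp Require Import all_boot all_order all_algebra.
From mathcomp Require Import ring zify.
Set Implicit Arguments. Unset Strict Implicit. Unset Printing Implicit Defensive.
Import Order.TTheory GRing.Theory Num.Theory.
Local Open Scope ring_scope.

Section Basics.
Variable K : fieldType.
Notation PP := {poly {poly K}}.
Implicit Types p q : PP.

Definition co (p : PP) (i j : nat) : K := (p`_j)`_i.
Definition mono (i j : nat) : PP := (@var_u K) ^+ i * (@var_v K) ^+ j.

Lemma co_eq p q : (forall i j, co p i j = co q i j) -> p = q.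
Proof. move=> H; apply/polyP => j; apply/polyP => i; exact: H. Qed.

Lemma coD p q i j : co (p + q) i j = co p i j + co q i j.
Proof. by rewrite /co !coefD. Qed.

Lemma co_sum (I : Type) (r : seq I) (P : pred I) (F : I -> PP) i j :
  co (\sum_(x <- r | P x) F x) i j = \sum_(x <- r | P x) co (F x) i j.
Proof. by rewrite /co !coef_sum. Qed.

Lemma cstE (c : K) : cst c = (c%:P)%:P. Proof. by []. Qed.

Lemma co_cstM (c : K) p i j : co (cst c * p) i j = c * co p i j.
Proof. by rewrite /co cstE coefCM coefCM. Qed.

Lemma monoE i j : mono i j = ('X^i)%:P * 'X^j.
Proof. by rewrite /mono /var_u /var_v rmorphXn. Qed.

Lemma co_mono (c : K) a b i j :
  co (cst c * mono a b) i j = if (i == a) && (j == b) then c else 0.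
Proof.
rewrite co_cstM /co monoE coefMXn.
case: (ltnP j b) => [ltjb|lebj].
  rewrite coef0 mulr0; case: (j =P b) => [Ejb|]; last by rewrite andbF.
  by move: ltjb; rewrite Ejb ltnn.
rewrite coefC.
case: (j =P b) => [->|Hjb]; first by rewrite subnn eqxx andbT coefXn; case: (i == a); rewrite ?mulr1 ?mulr0.
have -> : (j - b == 0)%N = false.
  by apply/negP; rewrite subn_eq0 => Hle; apply: Hjb; apply/eqP; rewrite eqn_leq Hle lebj.
by rewrite andbF coef0 mulr0.
Qed.

End Basics.
Arguments mono {K} i j.
Arguments var_u {K}.
Arguments var_v {K}.

Section S2.
Variable K : fieldType.
Notation PP := {poly {poly K}}.
Implicit Types p q : PP.

Lemma sum_delta (n x : nat) (F : nat -> K) :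
  \sum_(i < n) (if x == i then F i else 0) = if (x < n)%N then F x else 0.
Proof.
case: ltnP => Hx.
  rewrite (bigD1 (Ordinal Hx)) //= eqxx big1 ?addr0 // => i /= Hi.
  by case: eqP => // Exi; case/eqP: Hi; apply/val_inj => /=.
by rewrite big1 // => i _; case: eqP => // Exi; move: (ltn_ord i); rewrite -Exi ltnNge Hx.
Qed.

Lemma sum2_delta (n x y : nat) (m : nat -> nat) (F : nat -> nat -> K) :
  \sum_(j < n) \sum_(i < m j) (if (x == i) && (y == j) then F i j else 0)
  = if (y < n)%N && (x < m y)%N then F x y else 0.
Proof.
transitivity (\sum_(j < n) (if y == j then (if (x < m y)%N then F x y else 0) else 0)).
  apply: eq_bigr => j _; case: (y =P j) => [->|_].
    by rewrite -(sum_delta _ _ (F^~ j)); apply: eq_bigr => i _; rewrite ?eqxx andbT.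
  by rewrite big1 // => i _; rewrite andbF.
by rewrite (sum_delta n y (fun _ => if (x < m y)%N then F x y else 0)); case: (y < n)%N.
Qed.

Lemma sum2_delta_sw (n x y : nat) (m : nat -> nat) (F : nat -> nat -> K) :
  \sum_(j < n) \sum_(i < m j) (if (x == j) && (y == i) then F i j else 0)
  = if (x < n)%N && (y < m x)%N then F y x else 0.
Proof.
rewrite -(sum2_delta n y x m F); apply: eq_bigr => j _; apply: eq_bigr => i _.
by rewrite andbC.
Qed.

Lemma co_out p i j : ~~ ((j < size p)%N && (i < size (p`_j)%R)%N) -> co p i j = 0.
Proof.
rewrite negb_and -!leqNgt /co => /orP [H|H].
  by rewrite nth_default // nth_default // size_poly0.
by rewrite nth_default.
Qed.

Lemma co_sum2 p (lam : nat -> nat -> K) x y :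
  co (\sum_(j < size p) \sum_(i < size (p`_j)%R) cst (co p i j * lam i j) * mono i j) x y
  = co p x y * lam x y.
Proof.
rewrite co_sum; under eq_bigr => j _ do rewrite co_sum; under eq_bigr => j _ do
  under eq_bigr => i _ do rewrite co_mono.
rewrite (sum2_delta (size p) x y (fun j => size (p`_j)%R) (fun i j => co p i j * lam i j)); case: ifPn => // H.
by rewrite co_out // mul0r.
Qed.

Lemma co_sum2_sw p (lam : nat -> nat -> K) x y :
  co (\sum_(j < size p) \sum_(i < size (p`_j)%R) cst (co p i j * lam i j) * mono j i) x y
  = co p y x * lam y x.
Proof.
rewrite co_sum; under eq_bigr => j _ do rewrite co_sum; under eq_bigr => j _ do
  under eq_bigr => i _ do rewrite co_mono.
rewrite (sum2_delta_sw (size p) x y (fun j => size (p`_j)%R) (fun i j => co p i j * lam i j)); case: ifPn => // H.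
by rewrite co_out // mul0r.
Qed.

Lemma decomp p :
  p = \sum_(j < size p) \sum_(i < size (p`_j)%R) cst (co p i j) * mono i j.
Proof.
apply: co_eq => x y.
rewrite -(mulr1 (co p x y)) -(co_sum2 p (fun _ _ => 1)).
by congr co; apply: eq_bigr => j _; apply: eq_bigr => i _; rewrite mulr1.
Qed.

End S2.

Section S3.
Variable K : fieldType.
Notation PP := {poly {poly K}}.
Implicit Types p q : PP.

Definition cstm : {rmorphism K -> PP} := (@polyC {poly K} \o @polyC K).

Lemma cfu1 (U : PP) : commr_rmorph cstm U.
Proof. by move=> a; apply: mulrC. Qed.

Definition ev1 (U : PP) : {rmorphism {poly K} -> PP} := horner_morph (cfu1 U).

Lemma cfu2 (U V : PP) : commr_rmorph (ev1 U) V.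
Proof. by move=> a; apply: mulrC. Qed.

Definition ev2r (U V : PP) : {rmorphism PP -> PP} := horner_morph (cfu2 U V).
Definition ev2 (U V : PP) (q : PP) : PP := ev2r U V q.

Lemma ev2_cst U V c : ev2 U V (cst c) = cst c.
Proof. rewrite /ev2 /ev2r cstE. apply: etrans (horner_morphC (cfu2 U V) (c%:P)) _. exact: (horner_morphC (cfu1 U) c). Qed.

Lemma ev2_u U V : ev2 U V var_u = U.
Proof. rewrite /ev2 /ev2r /var_u. apply: etrans (horner_morphC (cfu2 U V) 'X) _. exact: (horner_morphX (cfu1 U)). Qed.

Lemma ev2_v U V : ev2 U V var_v = V.
Proof. rewrite /ev2 /ev2r /var_v. exact: (horner_morphX (cfu2 U V)). Qed.

Lemma ev2D U V p q : ev2 U V (p + q) = ev2 U V p + ev2 U V q.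
Proof. exact: rmorphD. Qed.
Lemma ev2M U V p q : ev2 U V (p * q) = ev2 U V p * ev2 U V q.
Proof. exact: rmorphM. Qed.
Lemma ev2_1 U V : ev2 U V 1 = 1.
Proof. exact: rmorph1. Qed.

Lemma ev2_decomp U V q :
  ev2 U V q = \sum_(j < size q) \sum_(i < size (q`_j)%R) cst (co q i j) * (U ^+ i * V ^+ j).
Proof.
rewrite {1}(decomp q) /ev2 rmorph_sum; apply: eq_bigr => j _.
rewrite rmorph_sum; apply: eq_bigr => i _.
rewrite rmorphM /mono rmorphM !rmorphXn -/(ev2 U V _).
by rewrite ev2_cst -[ev2r U V var_u]/(ev2 U V var_u) -[ev2r U V var_v]/(ev2 U V var_v) ev2_u ev2_v.
Qed.

Lemma ev2_sum U V (I : Type) (r : seq I) (P : pred I) (F : I -> PP) :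
  ev2 U V (\sum_(x <- r | P x) F x) = \sum_(x <- r | P x) ev2 U V (F x).
Proof. exact: rmorph_sum. Qed.

Lemma ev2X U V p n : ev2 U V (p ^+ n) = ev2 U V p ^+ n.
Proof. exact: rmorphXn. Qed.

Lemma ev2_comp U V U' V' q :
  ev2 U V (ev2 U' V' q) = ev2 (ev2 U V U') (ev2 U V V') q.
Proof.
rewrite [ev2 U' V' q]ev2_decomp [RHS]ev2_decomp ev2_sum; apply: eq_bigr => j _.
rewrite ev2_sum; apply: eq_bigr => i _.
by rewrite !ev2M !ev2X ev2_cst.
Qed.

Lemma ev2_id q : ev2 var_u var_v q = q.
Proof. by rewrite ev2_decomp [RHS]decomp. Qed.

Lemma ev2_cstM U V c q : ev2 U V (cst c * q) = cst c * ev2 U V q.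
Proof. by rewrite ev2M ev2_cst. Qed.

Lemma cstM (a b : K) : cst (a * b) = cst a * cst b.
Proof. exact: (rmorphM cstm). Qed.
Lemma cstX (a : K) n : cst (a ^+ n) = cst a ^+ n.
Proof. exact: (rmorphXn cstm). Qed.
Lemma cstD (a b : K) : cst (a + b) = cst a + cst b.
Proof. exact: (rmorphD cstm). Qed.
Lemma cst1 : cst (1 : K) = 1.
Proof. exact: (rmorph1 cstm). Qed.
Lemma cst0 : cst (0 : K) = 0.
Proof. exact: (rmorph0 cstm). Qed.
Lemma cstN (a : K) : cst (- a) = - cst a.
Proof. exact: (rmorphN cstm). Qed.

Lemma co_ev2_diag (a b : K) q x y :
  co (ev2 (cst a * var_u) (cst b * var_v) q) x y = co q x y * (a ^+ x * b ^+ y).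
Proof.
rewrite ev2_decomp -(co_sum2 q (fun i j => a ^+ i * b ^+ j)); congr co.
apply: eq_bigr => j _; apply: eq_bigr => i _.
rewrite !exprMn /mono !cstM !cstX; ring.
Qed.

Lemma co_ev2_sw (a b : K) q x y :
  co (ev2 (cst a * var_v) (cst b * var_u) q) x y = co q y x * (a ^+ y * b ^+ x).
Proof.
rewrite ev2_decomp -(co_sum2_sw q (fun i j => a ^+ i * b ^+ j)); congr co.
apply: eq_bigr => j _; apply: eq_bigr => i _.
rewrite !exprMn /mono !cstM !cstX; ring.
Qed.

End S3.

Section S4.
Variable K : fieldType.
Notation PP := {poly {poly K}}.
Implicit Types p q : PP.

Lemma mpow_comm (x : PP) n : mpow (@comm_mul K) x n = x ^+ n.
Proof. by elim: n => [|n IH] //=; rewrite /mpow /= -/(mpow _ x n) IH exprS. Qed.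

Lemma mat_act_comm (A : 'M[K]_2) q :
  mat_act (@comm_mul K) A q =
  ev2 (cst (A ord0 ord0) * var_u + cst (A ord_max ord0) * var_v)
      (cst (A ord0 ord_max) * var_u + cst (A ord_max ord_max) * var_v) q.
Proof.
rewrite ev2_decomp /mat_act; apply: eq_bigr => j _; apply: eq_bigr => i _.
by rewrite /comm_mul !mpow_comm.
Qed.

Lemma comp_scaleX (r : {poly K}) (c : K) x : (r \Po (c *: 'X))`_x = c ^+ x * r`_x.
Proof.
rewrite comp_polyE coef_sum.
under eq_bigr => i _ do rewrite exprZn !coefZ coefXn.
rewrite (eq_bigr (fun i : 'I_(size r) => if x == i then r`_i * c ^+ i else 0)); last first.
  by move=> i _; rewrite eq_sym; case: eqP => [->|_]; rewrite ?mulr1 ?mulr0 // mulrC.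
rewrite (sum_delta (size r) x (fun i => r`_i * c ^+ i)).
case: ltnP => H; first by rewrite mulrC.
by rewrite nth_default // mulr0.
Qed.

Definition Etw (j : nat) : PP -> PP := ev2 (cst ((-1) ^+ j) * var_u) var_v.

Lemma skew_mulE p q :
  skew_mul p q = \sum_(j < size p) ((p`_j)%:P * 'X^j) * Etw j q.
Proof.
rewrite /skew_mul; apply: eq_bigr => j _.
have -> : Etw j q = \sum_(b < size q) ((q`_b \Po ((-1) ^+ j *: 'X)))%:P * 'X^b.
  apply: co_eq => x y.
  rewrite /Etw -[var_v]mul1r -cst1 co_ev2_diag co_sum.
  under eq_bigr => b _ do rewrite /co coefMXn coefC.
  have Hif : forall (b : nat) (R : {poly K}),
      (if (y < b)%N then 0 else if (y - b == 0)%N then R else 0)`_x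
      = if y == b then R`_x else 0.
    move=> b R; case: (ltngtP y b) => H.
    - by rewrite coef0.
    - by rewrite subn_eq0 leqNgt H coef0.
    - by rewrite H subnn eqxx.
  under eq_bigr => b _ do rewrite Hif.
  rewrite (sum_delta (size q) y (fun b => (q`_b \Po ((-1) ^+ j *: 'X))`_x)).
  rewrite expr1n mulr1 /co.
  case: ltnP => H; first by rewrite comp_scaleX -exprM mulrC exprM.
  have -> : q`_y = 0 by rewrite nth_default.
  by rewrite coef0 mul0r.
rewrite mulr_sumr; apply: eq_bigr => b _.
by rewrite rmorphM exprD; ring.
Qed.

Lemma skew_mulW N p q : (size p <= N)%N ->
  skew_mul p q = \sum_(j < N) ((p`_j)%:P * 'X^j) * Etw j q.
Proof.
move=> H; rewrite skew_mulE (big_ord_widen N (fun j => ((p`_j)%:P * 'X^j) * Etw j q) H).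
rewrite big_mkcond; apply: eq_bigr => j _; case: ltnP => // Hj.
by rewrite nth_default // !mul0r.
Qed.

Lemma skD_l p1 p2 q : skew_mul (p1 + p2) q = skew_mul p1 q + skew_mul p2 q.
Proof.
set N := (size p1 + size p2)%N.
have H1 : (size p1 <= N)%N by rewrite leq_addr.
have H2 : (size p2 <= N)%N by rewrite leq_addl.
have H3 : (size (p1 + p2)%R <= N)%N.
  by apply: leq_trans (size_add _ _) _; rewrite geq_max H1 H2.
rewrite (skew_mulW q H1) (skew_mulW q H2) (skew_mulW q H3) -big_split.
by apply: eq_bigr => j _; rewrite coefD rmorphD /= !mulrDl.
Qed.

Lemma sk0_l q : skew_mul 0 q = 0.
Proof. by rewrite skew_mulE size_poly0 big_ord0. Qed.

Lemma sk_sum_l (I : Type) (r : seq I) (P : pred I) (F : I -> PP) q :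
  skew_mul (\sum_(x <- r | P x) F x) q = \sum_(x <- r | P x) skew_mul (F x) q.
Proof. exact: (big_morph (fun p => skew_mul p q) (fun a b => skD_l a b q) (sk0_l q)). Qed.

Lemma skZ_l (c : K) p q : skew_mul (cst c * p) q = cst c * skew_mul p q.
Proof.
set N := (size p + size (cst c * p)%R)%N.
rewrite (@skew_mulW N p q) ?leq_addr // (@skew_mulW N (cst c * p) q) ?leq_addl //.
rewrite mulr_sumr; apply: eq_bigr => j _.
by rewrite cstE coefCM rmorphM /= !mulrA.
Qed.

Lemma skD_r p q1 q2 : skew_mul p (q1 + q2) = skew_mul p q1 + skew_mul p q2.
Proof.
rewrite !skew_mulE -big_split; apply: eq_bigr => j _.
by rewrite /Etw ev2D mulrDr.
Qed.

Lemma ev2_0 (U V : PP) : ev2 U V 0 = 0. Proof. exact: rmorph0. Qed.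
Lemma sk0_r p : skew_mul p 0 = 0.
Proof.
rewrite skew_mulE big1 // => j _.
by rewrite /Etw ev2_0 mulr0.
Qed.

Lemma dummy_sk : True. Proof. by []. Qed.
Lemma sk_sum_r (I : Type) (r : seq I) (P : pred I) (F : I -> PP) p :
  skew_mul p (\sum_(x <- r | P x) F x) = \sum_(x <- r | P x) skew_mul p (F x).
Proof. exact: (big_morph (fun q => skew_mul p q) (fun a b => skD_r p a b) (sk0_r p)). Qed.

Lemma skZ_r (c : K) p q : skew_mul p (cst c * q) = cst c * skew_mul p q.
Proof.
rewrite !skew_mulE mulr_sumr; apply: eq_bigr => j _.
by rewrite /Etw ev2_cstM; ring.
Qed.

Lemma coef_cmono (c : K) i j m :
  (cst c * mono i j)`_m = if m == j then c%:P * 'X^i else 0.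
Proof.
rewrite monoE cstE mulrA -rmorphM /= coefMXn coefC.
case: (ltngtP m j) => H.
- by [].
- by rewrite subn_eq0 leqNgt H.
- by rewrite H subnn eqxx.
Qed.

Lemma size_cmono (c : K) i j : (size (cst c * mono i j)%R <= j.+1)%N.
Proof.
apply/leq_sizeP => m Hm; rewrite coef_cmono.
by case: eqP => // E; move: Hm; rewrite E ltnn.
Qed.

Lemma sk_mono (c d : K) i j a b :
  skew_mul (cst c * mono i j) (cst d * mono a b)
  = cst (c * d * (-1) ^+ (j * a)) * mono (i + a) (j + b).
Proof.
rewrite (skew_mulW _ (size_cmono c i j)) big_ord_recr /= big1; last first.
  by move=> m _; rewrite coef_cmono (ltn_eqF (ltn_ord m)) !mul0r.
rewrite add0r coef_cmono eqxx /Etw ev2_cstM /mono ev2M !ev2X ev2_u ev2_v.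
rewrite !cstM !cstX exprM /var_u /var_v rmorphM rmorphXn /= -/(cst c) exprMn exprD exprD.
rewrite -!cstX.
ring.
Qed.

End S4.

Lemma bin2_add j b : 'C(j + b, 2) = ('C(j, 2) + 'C(b, 2) + j * b)%N.
Proof.
elim: b => [|b IH]; first by rewrite addn0 bin0n muln0 !addn0.
by rewrite addnS !binS !bin1 IH; lia.
Qed.

Section S5.
Variable K : fieldType.
Notation PP := {poly {poly K}}.
Implicit Types p q : PP.

Definition hs (j : nat) : K := (-1) ^+ 'C(j, 2).

Definition th (p : PP) : PP := \poly_(j < size p) (hs j *: p`_j).

Lemma co_th p x y : co (th p) x y = co p x y * hs y.
Proof.
rewrite /co /th coef_poly; case: ltnP => H.
  by rewrite coefZ mulrC.
rewrite coef0; have -> : p`_y = 0 by rewrite nth_default.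
by rewrite coef0 mul0r.
Qed.

Lemma th_decomp p :
  th p = \sum_(j < size p) \sum_(i < size (p`_j)%R) cst (co p i j * hs j) * mono i j.
Proof. by apply: co_eq => x y; rewrite co_th (co_sum2 p (fun _ j => hs j)). Qed.

Lemma thD p q : th (p + q) = th p + th q.
Proof. by apply: co_eq => x y; rewrite coD !co_th coD mulrDl. Qed.

Lemma th0 : th 0 = 0.
Proof. by apply: co_eq => x y; rewrite co_th /co !coef0 mul0r. Qed.

Lemma th_sum (I : Type) (r : seq I) (P : pred I) (F : I -> PP) :
  th (\sum_(x <- r | P x) F x) = \sum_(x <- r | P x) th (F x).
Proof. exact: (big_morph th thD th0). Qed.

Lemma th_cstM (c : K) p : th (cst c * p) = cst c * th p.
Proof. by apply: co_eq => x y; rewrite co_th !co_cstM co_th mulrA. Qed.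

Lemma th_cmono (c : K) i j : th (cst c * mono i j) = cst (c * hs j) * mono i j.
Proof.
apply: co_eq => x y; rewrite co_th !co_mono.
case: (y =P j) => [->|_]; rewrite ?andbF ?andbT ?mul0r //.
by case: (x == i); rewrite ?mul0r.
Qed.

Lemma th_th p : th (th p) = p.
Proof.
by apply: co_eq => x y; rewrite !co_th -mulrA /hs -exprD -signr_odd addnn odd_double expr0 mulr1.
Qed.

Lemma th1 : th 1 = 1.
Proof.
have -> : (1 : PP) = cst 1 * mono 0 0 by rewrite cst1 /mono !expr0 !mulr1.
by rewrite th_cmono /hs bin0n expr0 mulr1.
Qed.

Lemma mono_mul i j a b : mono i j * mono a b = mono (i + a) (j + b) :> PP.
Proof. by rewrite /mono !exprD; ring. Qed.

Definition evn (p : PP) := forall x y, co p x y != 0 -> ~~ odd (x + y).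

Lemma sign_mul (j a b : nat) : ~~ odd (a + b) ->
  (-1) ^+ (j * a) * hs (j + b) = hs j * hs b :> K.
Proof.
move=> Hab; rewrite /hs bin2_add -!exprD -signr_odd -[RHS]signr_odd.
congr (_ ^+ _); move: Hab; rewrite !oddD !oddM.
by case: (odd a); case: (odd b); case: (odd j); case: (odd 'C(j, 2)); case: (odd 'C(b, 2)).
Qed.

Lemma th_mul p q : evn p -> evn q -> th (skew_mul p q) = th p * th q.
Proof.
move=> Ep Eq.
rewrite {1}(decomp p) {1}(decomp q) (th_decomp p) (th_decomp q).
rewrite sk_sum_l th_sum mulr_suml; apply: eq_bigr => j _.
rewrite sk_sum_l th_sum mulr_suml; apply: eq_bigr => i _.
rewrite sk_sum_r th_sum mulr_sumr; apply: eq_bigr => b _.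
rewrite sk_sum_r th_sum mulr_sumr; apply: eq_bigr => a _.
rewrite sk_mono th_cmono.
have -> : cst (co p i j * hs j) * mono i j * (cst (co q a b * hs b) * mono a b)
  = cst (co p i j * hs j * (co q a b * hs b)) * mono (i + a) (j + b).
  by rewrite cstM -mono_mul; ring.
congr (cst _ * _).
have [c0|cn0] := eqVneq (co p i j) 0; first by rewrite c0 !mul0r.
have [d0|dn0] := eqVneq (co q a b) 0; first by rewrite d0 mulr0 !mul0r mulr0.
have Hab := Eq _ _ dn0.
rewrite -mulrA sign_mul //.
ring.
Qed.

Lemma mpow_skew_v (c : K) n :
  mpow (@skew_mul K) (cst c * var_v) n = cst (c ^+ n) * mono 0 n.
Proof.
elim: n => [|n IH].
  by rewrite /mpow /= expr0 cst1 /mono !expr0 mulr1 mul1r.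
rewrite /mpow /= -/(mpow _ _ n) IH.
have -> : cst c * var_v = cst c * mono 0 1 by rewrite /mono expr0 mul1r expr1.
by rewrite sk_mono muln0 expr0 mulr1 -exprS.
Qed.

Lemma mpow_skew_u (c : K) n :
  mpow (@skew_mul K) (cst c * var_u) n = cst (c ^+ n) * mono n 0.
Proof.
elim: n => [|n IH].
  by rewrite /mpow /= expr0 cst1 /mono !expr0 mulr1 mul1r.
rewrite /mpow /= -/(mpow _ _ n) IH.
have -> : cst c * var_u = cst c * mono 1 0 by rewrite /mono expr0 mulr1 expr1.
by rewrite sk_mono mul0n expr0 mulr1 -exprS.
Qed.

Lemma co_act_skew_anti (A : 'M[K]_2) p x y :
  A ord0 ord0 = 0 -> A ord_max ord_max = 0 ->
  co (mat_act (@skew_mul K) A p) x y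
  = co p y x * (A ord_max ord0 ^+ y * A ord0 ord_max ^+ x * (-1) ^+ (y * x)).
Proof.
move=> H00 H11.
rewrite /mat_act H00 H11 cst0 !mul0r add0r addr0.
rewrite -(co_sum2_sw p (fun i j => A ord_max ord0 ^+ i * A ord0 ord_max ^+ j * (-1) ^+ (i * j))).
congr co; apply: eq_bigr => j _; apply: eq_bigr => i _.
rewrite mpow_skew_v mpow_skew_u sk_mono add0n addn0 !cstM; rewrite -/(co p i j); ring.
Qed.

Lemma co_act_skew_diag (A : 'M[K]_2) p x y :
  A ord_max ord0 = 0 -> A ord0 ord_max = 0 ->
  co (mat_act (@skew_mul K) A p) x y
  = co p x y * (A ord0 ord0 ^+ x * A ord_max ord_max ^+ y).
Proof.
move=> H10 H01.
rewrite /mat_act H10 H01 cst0 !mul0r add0r addr0.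
rewrite -(co_sum2 p (fun i j => A ord0 ord0 ^+ i * A ord_max ord_max ^+ j)).
congr co; apply: eq_bigr => j _; apply: eq_bigr => i _.
rewrite mpow_skew_v mpow_skew_u sk_mono addn0 add0n muln0 expr0 mulr1 !cstM; rewrite -/(co p i j); ring.
Qed.

End S5.

Section S6.
Variable K : fieldType.

Lemma ord2P (i : 'I_2) : i = ord0 \/ i = ord_max.
Proof.
case: i => [[|[|m]] H]; [left|right|by []]; exact: val_inj.
Qed.

Definition Mg (b : K) (s : bool) : 'M[K]_2 :=
  \matrix_(i < 2, j < 2) (if (i == j) != s then b else 0).

Definition Dg (a b : K) : 'M[K]_2 :=
  \matrix_(i < 2, j < 2) (if i == j then (if i == ord0 then a else b) else 0).

Lemma mul2E (A B : 'M[K]_2) i j : (A *m B) i j = A i ord0 * B ord0 j + A i ord_max * B ord_max j.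
Proof.
rewrite mxE big_ord_recr big_ord_recr big_ord0 /= add0r.
by have -> : widen_ord (leqnSn 1) ord_max = ord0 :> 'I_2 by apply: val_inj.
Qed.

Lemma Mg_mul b c s t : Mg b s *m Mg c t = Mg (b * c) (s (+) t).
Proof.
apply/matrixP => i j; rewrite mul2E !mxE.
by case: (ord2P i) => ->; case: (ord2P j) => ->; case: s; case: t => /=;
  rewrite ?mulr0 ?mul0r ?addr0 ?add0r.
Qed.

Lemma Dg_mul a b c d : Dg a b *m Dg c d = Dg (a * c) (b * d).
Proof.
apply/matrixP => i j; rewrite mul2E !mxE.
by case: (ord2P i) => ->; case: (ord2P j) => -> /=;
  rewrite ?mulr0 ?mul0r ?addr0 ?add0r.
Qed.

Lemma Mg1 : Mg 1 false = 1%:M.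
Proof.
apply/matrixP => i j; rewrite !mxE.
by case: (ord2P i) => ->; case: (ord2P j) => ->.
Qed.

Lemma Dg1 : Dg 1 1 = 1%:M.
Proof.
apply/matrixP => i j; rewrite !mxE.
by case: (ord2P i) => ->; case: (ord2P j) => ->.
Qed.

Lemma invmx_right (A B : 'M[K]_2) : A *m B = 1%:M -> invmx A = B.
Proof.
move=> AB; have [uA _] := mulmx1_unit AB.
by rewrite -(mulKmx uA B) AB mulmx1.
Qed.

Lemma in_gen_G (k : nat) (w : K) (hw : (2 * k).-primitive_root w) (g : 'M[K]_2) :
  in_gen (G_gens 1 k w) g -> exists n, g = Mg (w ^+ n) (odd n).
Proof.
have w2k : w ^+ (2 * k) = 1 := prim_expr_order hw.
have k0 : (0 < 2 * k)%N := prim_order_gt0 hw.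
have Hd0 : \matrix_(i < 2, j < 2)
        (if i == j then (if i == ord0 then w ^+ (2 * k) else (w ^+ (2 * k))^-1) else 0)
        = Mg (w ^+ 0) (odd 0).
  apply/matrixP => i j; rewrite !mxE w2k invr1 expr0.
  by case: (ord2P i) => ->; case: (ord2P j) => ->.
have Hg1 : \matrix_(i < 2, j < 2) (if i == j then 0 else w ^+ 1) = Mg (w ^+ 1) (odd 1).
  apply/matrixP => i j; rewrite !mxE.
  by case: (ord2P i) => ->; case: (ord2P j) => ->.
have Hinv : invmx (Mg (w ^+ 1) (odd 1)) = Mg (w ^+ (2 * k).-1) (odd (2 * k).-1).
  apply: invmx_right; rewrite Mg_mul -exprD.
  have -> : (1 + (2 * k).-1 = 2 * k)%N by lia.
  have -> : odd 1 (+) odd (2 * k).-1 = false.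
    have -> : (2 * k).-1 = (2 * k.-1).+1 by lia.
    by rewrite !oddS oddM.
  by rewrite w2k Mg1.
move=> [l [Hl ->]].
elim: l Hl => [|h l IH] /=.
  by move=> _; exists 0%N; rewrite expr0 /= Mg1.
move=> /andP [Hh Hl]; have [n ->] := IH Hl.
have [m Hm] : exists m, h = Mg (w ^+ m) (odd m).
  move: Hh; rewrite /G_gens /= !inE => /or4P [] /eqP ->.
  - by exists 0%N; rewrite Hd0.
  - by exists 1%N; rewrite Hg1.
  - by exists 0%N; rewrite Hd0 expr0 /= Mg1 invmx1.
  - by exists (2 * k).-1; rewrite Hg1 Hinv.
exists (m + n)%N; by rewrite Hm Mg_mul exprD oddD.
Qed.

Lemma in_gen_C (k : nat) (z : K) (hz : (2 * k).-primitive_root z) (g : 'M[K]_2) :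
  in_gen (cyc_gens (k + 1) z) g -> exists n, g = Dg (z ^+ n) (z ^+ (k + 1) ^+ n).
Proof.
have z2k : z ^+ (2 * k) = 1 := prim_expr_order hz.
have k0 : (0 < 2 * k)%N := prim_order_gt0 hz.
have Hg : \matrix_(i < 2, j < 2)
        (if i == j then (if i == ord0 then z else z ^+ (k + 1)) else 0)
        = Dg (z ^+ 1) (z ^+ (k + 1) ^+ 1).
  by apply/matrixP => i j; rewrite !mxE.
have Hinv : invmx (Dg (z ^+ 1) (z ^+ (k + 1) ^+ 1))
          = Dg (z ^+ (2 * k).-1) (z ^+ (k + 1) ^+ (2 * k).-1).
  apply: invmx_right; rewrite Dg_mul -!exprD.
  have -> : (1 + (2 * k).-1 = 2 * k)%N by lia.
  by rewrite z2k -exprM mulnC exprM z2k expr1n Dg1.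
move=> [l [Hl ->]].
elim: l Hl => [|h l IH] /=.
  by move=> _; exists 0%N; rewrite !expr0 Dg1.
move=> /andP [Hh Hl]; have [n ->] := IH Hl.
have [m Hm] : exists m, h = Dg (z ^+ m) (z ^+ (k + 1) ^+ m).
  move: Hh; rewrite /cyc_gens /= !inE => /orP [] /eqP ->.
  - by exists 1%N; rewrite Hg.
  - by exists (2 * k).-1; rewrite Hg Hinv.
exists (m + n)%N; by rewrite Hm Dg_mul !exprD.
Qed.

End S6.

Lemma sign_sw (x y s : nat) : (x + y = 2 * s)%N ->
  ~~ odd ('C(x, 2) + s) = ~~ odd ('C(y, 2) + y * x).
Proof.
move=> Hs.
have H1 : 'C(x + y, 2) = ('C(x, 2) + 'C(y, 2) + x * y)%N by apply: bin2_add.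
have H2 : 'C(s + s, 2) = ('C(s, 2) + 'C(s, 2) + s * s)%N by apply: bin2_add.
have Hss : (s + s = x + y)%N by lia.
rewrite Hss H1 in H2.
have : odd ('C(x, 2) + 'C(y, 2) + x * y) = odd ('C(s, 2) + 'C(s, 2) + s * s) by rewrite H2.
rewrite !oddD !oddM.
by case: (odd 'C(x,2)); case: (odd 'C(y,2)); case: (odd x); case: (odd y); case: (odd s);
   case: (odd 'C(s,2)).
Qed.

Section Roots.
Variable K : fieldType.
Variable k t : nat.
Hypothesis Hkt : k = (t * 4)%N.
Hypothesis ht : (0 < t)%N.
Variable w : K.
Hypothesis hw : (2 * k).-primitive_root w.

Lemma w2k : w ^+ (2 * k) = 1.
Proof. exact: prim_expr_order hw. Qed.

Lemma wk : w ^+ k = -1.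
Proof.
have : (w ^+ k) ^+ 2 == 1 by rewrite -exprM mulnC w2k.
rewrite sqrf_eq1 => /orP [/eqP H|/eqP //].
have := prim_order_dvd hw k; rewrite H eqxx => /esym Hd.
have : (2 * k <= k)%N by apply: dvdn_leq => //; rewrite Hkt; lia.
by rewrite Hkt; lia.
Qed.

Definition al : K := w ^+ (2 * t + 1).

Lemma al2 : al ^+ 2 = - w ^+ 2.
Proof.
rewrite /al -exprM.
have -> : ((2 * t + 1) * 2 = k + 2)%N by rewrite Hkt; lia.
by rewrite exprD wk mulN1r.
Qed.

Lemma al_prim : (2 * k).-primitive_root al.
Proof.
rewrite /al prim_root_exp_coprime // Hkt.
have -> : (2 * (t * 4) = 8 * t)%N by lia.
rewrite coprimeMr; apply/andP; split.
  have -> : (8 = 2 * 2 * 2)%N by [].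
  by rewrite !coprimeMr coprimen2 addn1 /= oddM.
by rewrite coprime_sym /coprime gcdnMDl gcdn1.
Qed.

Lemma alk : al ^+ k = -1.
Proof.
rewrite /al -exprM mulnC exprM wk -signr_odd.
by rewrite oddD oddM /= expr1.
Qed.

Lemma alN : - al = al ^+ (k + 1).
Proof. by rewrite exprD alk expr1 mulN1r. Qed.

Lemma w_pow_k (x : nat) : (k %| x)%N -> w ^+ (2 * x) = 1.
Proof.
move=> /dvdnP [r ->].
have -> : (2 * (r * k) = (2 * k) * r)%N by lia.
by rewrite exprM w2k expr1n.
Qed.

Lemma al_even (s : nat) : al ^+ (2 * s) = (-1) ^+ s * w ^+ (2 * s).
Proof. by rewrite !exprM al2 -[- w ^+ 2]mulN1r exprMn. Qed.

End Roots.

Section Maps.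
Variable K : fieldType.
Notation PP := {poly {poly K}}.
Hypothesis two_nz : (2%:R : K) != 0.
Variable a : K.

Definition L : PP -> PP := ev2 (var_u + var_v) (var_u - var_v).
Definition Li : PP -> PP :=
  ev2 (cst (2%:R^-1) * (var_u + var_v)) (cst (2%:R^-1) * (var_u - var_v)).
Definition Gp : PP -> PP := ev2 (cst a * var_v) (cst a * var_u).
Definition Dm : PP -> PP := ev2 (cst a * var_u) (cst (- a) * var_v).

Lemma ev2B (U V p q : PP) : ev2 U V (p - q) = ev2 U V p - ev2 U V q.
Proof. exact: rmorphB. Qed.

Lemma half2 : cst (2%:R^-1 : K) * 2%:R = 1.
Proof.
have -> : (2%:R : PP) = cst 2%:R by rewrite /cst !rmorph_nat.
by rewrite -cstM mulVf // cst1.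
Qed.

Lemma L_Li q : L (Li q) = q.
Proof.
rewrite /L /Li ev2_comp !ev2_cstM ev2D ev2B !ev2_u !ev2_v -[RHS]ev2_id.
congr ev2.
  have -> : var_u + var_v + (var_u - var_v) = (2%:R : PP) * var_u by ring.
  by rewrite mulrA half2 mul1r.
have -> : var_u + var_v - (var_u - var_v) = (2%:R : PP) * var_v by ring.
by rewrite mulrA half2 mul1r.
Qed.

Lemma Li_L q : Li (L q) = q.
Proof.
rewrite /L /Li ev2_comp ev2D ev2B !ev2_u !ev2_v -[RHS]ev2_id.
congr ev2.
  have -> : cst 2%:R^-1 * (var_u + var_v) + cst 2%:R^-1 * (var_u - var_v)
     = cst 2%:R^-1 * 2%:R * (var_u : PP) by ring.
  by rewrite half2 mul1r.
have -> : cst 2%:R^-1 * (var_u + var_v) - cst 2%:R^-1 * (var_u - var_v)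
     = cst 2%:R^-1 * 2%:R * (var_v : PP) by ring.
by rewrite half2 mul1r.
Qed.

Lemma L_Gp q : L (Gp q) = Dm (L q).
Proof.
rewrite /L /Gp /Dm !ev2_comp !ev2_cstM ev2D ev2B !ev2_u !ev2_v.
by congr ev2; rewrite cstN; ring.
Qed.

Lemma Li_Dm q : Li (Dm q) = Gp (Li q).
Proof. by rewrite -{1}(L_Li q) -L_Gp Li_L. Qed.

Lemma co_Gp q x y : co (Gp q) x y = co q y x * (a ^+ y * a ^+ x).
Proof. exact: co_ev2_sw. Qed.

Lemma co_Dm q x y : co (Dm q) x y = co q x y * (a ^+ x * (- a) ^+ y).
Proof. exact: co_ev2_diag. Qed.

End Maps.

Section Inv.
Variable K : fieldType.
Notation PP := {poly {poly K}}.
Variable k t : nat.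
Hypothesis Hkt : k = (t * 4)%N.
Hypothesis ht : (0 < t)%N.
Variable w : K.
Hypothesis hw : (2 * k).-primitive_root w.
Variable z : K.
Hypothesis hz : (2 * k).-primitive_root z.

Definition Pc (p : PP) :=
  (forall x y, co p x y = co p y x * (w ^+ y * w ^+ x * (-1) ^+ (y * x))) /\
  (forall x y, co p x y != 0 -> (k %| x + y)%N).

Definition Qc (q : PP) := forall x y, co q x y != 0 -> (2 * k %| x + (k + 1) * y)%N.

Lemma g1E : \matrix_(i < 2, j < 2) (if i == j then 0 else w ^+ 1) = Mg (w ^+ 1) true.
Proof.
apply/matrixP => i j; rewrite !mxE.
by case: (ord2P i) => ->; case: (ord2P j) => ->.
Qed.

Lemma co_act_Mg (b : K) (s : bool) p x y :
  co (mat_act (@skew_mul K) (Mg b s) p) x y =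
  if s then co p y x * (b ^+ y * b ^+ x * (-1) ^+ (y * x))
  else co p x y * (b ^+ x * b ^+ y).
Proof.
case: s.
  by rewrite co_act_skew_anti ?mxE.
by rewrite co_act_skew_diag ?mxE.
Qed.

Lemma w_pow_n n s : (k %| s)%N -> w ^+ (n * s) = w ^+ (odd n * s).
Proof.
move=> Hs.
rewrite -{1}(odd_double_half n) mulnDl exprD.
have -> : ((n./2).*2 * s = 2 * (n./2 * s))%N by rewrite -muln2; lia.
rewrite (w_pow_k Hkt ht hw) ?mulr1 //.
by apply: dvdn_mull.
Qed.

Lemma P_Pc p : is_invariant (@skew_mul K) (G_gens 1 k w) p -> Pc p.
Proof.
move=> Hp.
have Hin : in_gen (G_gens 1 k w) (Mg (w ^+ 1) true).
  exists [:: Mg (w ^+ 1) true]; split; last by rewrite /= mulmx1.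
  by rewrite /= andbT -g1E !inE eqxx orbT.
have E1 : forall x y, co p x y = co p y x * (w ^+ y * w ^+ x * (-1) ^+ (y * x)).
  move=> x y; rewrite -{1}(Hp _ Hin) co_act_Mg.
  by rewrite !expr1.
split=> // x y Hc.
have H2 : co p x y = co p x y * (w ^+ (2 * (x + y))).
  rewrite {1}E1 E1 -mulrA; congr (_ * _).
  rewrite (mulnC x y).
  have Hs : (-1) ^+ (y * x) * (-1) ^+ (y * x) = 1 :> K.
    by rewrite -exprD -signr_odd addnn odd_double.
  have Hw : w ^+ (2 * (x + y)) = w ^+ x * w ^+ x * w ^+ y * w ^+ y.
    by rewrite mul2n -addnn !exprD; ring.
  rewrite Hw; transitivity (w ^+ x * w ^+ x * w ^+ y * w ^+ y * ((-1) ^+ (y * x) * (-1) ^+ (y * x))).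
    by ring.
  by rewrite Hs mulr1.
have : w ^+ (2 * (x + y)) == 1.
  by apply/eqP; apply: (mulfI Hc); rewrite mulr1 -H2.
rewrite -(prim_order_dvd hw) dvdn_pmul2l //.
Qed.

Lemma Pc_P p : Pc p -> is_invariant (@skew_mul K) (G_gens 1 k w) p.
Proof.
move=> [E1 Sp] g /(in_gen_G hw) [n ->].
apply: co_eq => x y; rewrite co_act_Mg.
case: ifPn => Hn.
  have [c0|cn0] := eqVneq (co p y x) 0.
    by rewrite c0 mul0r E1 c0 mul0r.
  rewrite [RHS]E1; congr (_ * _); congr (_ * _).
  have Hs := Sp _ _ cn0.
  rewrite -!exprM -!exprD -!mulnDr w_pow_n // Hn mul1n.
  by rewrite addnC.
have [c0|cn0] := eqVneq (co p x y) 0; first by rewrite c0 mul0r.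
have Hs := Sp _ _ cn0.
rewrite -!exprM -exprD -mulnDr w_pow_n // (negbTE Hn) mul0n expr0 mulr1 //.
Qed.

Lemma co_act_Dg (a b : K) q x y :
  co (mat_act (@comm_mul K) (Dg a b) q) x y = co q x y * (a ^+ x * b ^+ y).
Proof.
rewrite mat_act_comm !mxE /= cst0 !mul0r addr0 add0r.
exact: co_ev2_diag.
Qed.

Lemma Q_Qc q : is_invariant (@comm_mul K) (cyc_gens (k + 1) z) q -> Qc q.
Proof.
move=> Hq.
have Hin : in_gen (cyc_gens (k + 1) z) (Dg z (z ^+ (k + 1))).
  exists [:: Dg z (z ^+ (k + 1))]; split; last by rewrite /= mulmx1.
  by rewrite /= andbT !inE eqxx.
move=> x y Hc.
have H2 : co q x y = co q x y * (z ^+ (x + (k + 1) * y)).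
  by rewrite -{1}(Hq _ Hin) co_act_Dg [in RHS]exprD [in RHS]exprM.
have : z ^+ (x + (k + 1) * y) == 1.
  by apply/eqP; apply: (mulfI Hc); rewrite mulr1 -H2.
by rewrite -(prim_order_dvd hz).
Qed.

Lemma Qc_Q q : Qc q -> is_invariant (@comm_mul K) (cyc_gens (k + 1) z) q.
Proof.
move=> Hq g /(in_gen_C hz) [n ->].
apply: co_eq => x y; rewrite co_act_Dg.
have [c0|cn0] := eqVneq (co q x y) 0; first by rewrite c0 mul0r.
have := Hq _ _ cn0; rewrite (prim_order_dvd hz) => /eqP Hz.
have -> : (z ^+ n) ^+ x * ((z ^+ (k + 1)) ^+ n) ^+ y = (z ^+ (x + (k + 1) * y)) ^+ n.
  by rewrite -!exprM -exprD; congr (_ ^+ _); lia.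
by rewrite Hz expr1n mulr1.
Qed.

End Inv.

Lemma sgn_eq (K : fieldType) (x y s : nat) : (x + y = 2 * s)%N ->
  hs K x * (-1) ^+ s = (-1) ^+ (y * x) * hs K y.
Proof.
move=> H; rewrite /hs -!exprD.
have Ho : odd ('C(x, 2) + s) = odd (y * x + 'C(y, 2)).
  by have := sign_sw H; rewrite (addnC 'C(y, 2)) => /negb_inj.
by rewrite -(signr_odd _ ('C(x, 2) + s)) Ho signr_odd.
Qed.

Section Main.
Variable K : fieldType.
Notation PP := {poly {poly K}}.
Hypothesis two_nz : (2%:R : K) != 0.
Variable k t : nat.
Hypothesis Hkt : k = (t * 4)%N.
Hypothesis ht : (0 < t)%N.
Variable w : K.
Hypothesis hw : (2 * k).-primitive_root w.
Variable z : K.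
Hypothesis hz : (2 * k).-primitive_root z.

Local Notation a := (al t w).
Definition fm (p : PP) : PP := L (th p).

Lemma half_of (x y : nat) : (k %| x + y)%N -> exists s, (x + y = 2 * s)%N.
Proof. by move=> /dvdnP [m Hm]; exists (m * 2 * t)%N; rewrite Hm Hkt; lia. Qed.

Lemma Dm_Qc (r : PP) : Dm a r = r -> Qc k r.
Proof.
move=> Hr x y Hc.
have H2 : co r x y = co r x y * (a ^+ (x + (k + 1) * y)).
  by rewrite -{1}Hr co_Dm (alN Hkt ht hw) [in RHS]exprD [in RHS]exprM.
have : a ^+ (x + (k + 1) * y) == 1.
  by apply/eqP; apply: (mulfI Hc); rewrite mulr1 -H2.
by rewrite -(prim_order_dvd (al_prim Hkt ht hw)).
Qed.

Lemma Qc_Dm (q : PP) : Qc k q -> Dm a q = q.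
Proof.
move=> Hq; apply: co_eq => x y; rewrite co_Dm.
have [c0|cn0] := eqVneq (co q x y) 0; first by rewrite c0 mul0r.
have := Hq _ _ cn0; rewrite (prim_order_dvd (al_prim Hkt ht hw)) => /eqP Ha.
by rewrite (alN Hkt ht hw) -[(al t w ^+ (k + 1)) ^+ y]exprM -exprD Ha mulr1.
Qed.

Lemma Pc_Qc p : Pc k w p -> Qc k (fm p).
Proof.
move=> [E1 Sp]; apply: Dm_Qc.
have HG : Gp a (th p) = th p.
  apply: co_eq => x y; rewrite co_Gp !co_th [in RHS]E1.
  have [c0|cn0] := eqVneq (co p y x) 0; first by rewrite c0 !mul0r.
  have [s Hs] := half_of (Sp _ _ cn0).
  have Hs' : (x + y = 2 * s)%N by rewrite addnC.
  rewrite -[al t w ^+ y * al t w ^+ x]exprD Hs (al_even Hkt ht hw) -Hs.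
  rewrite [w ^+ (y + x)]exprD.
  transitivity (co p y x * (w ^+ y * w ^+ x) * (hs K x * (-1) ^+ s)); first by ring.
  by rewrite (sgn_eq K Hs'); ring.
by rewrite /fm -L_Gp HG.
Qed.

Lemma Qc_Pc q : Qc k q -> Pc k w (th (Li q)) /\ fm (th (Li q)) = q.
Proof.
move=> Hq.
set r := Li q.
have HG : Gp a r = r by rewrite /r -Li_Dm // Qc_Dm.
have E : forall x y, co r x y = co r y x * (a ^+ y * a ^+ x).
  by move=> x y; rewrite -{1}HG co_Gp.
have Sr : forall x y, co r x y != 0 -> (k %| x + y)%N.
  move=> x y Hc.
  have H2 : co r x y = co r x y * (a ^+ (2 * (x + y))).
    rewrite {1}E E -mulrA; congr (_ * _).
    by rewrite mul2n -addnn !exprD; ring.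
  have : a ^+ (2 * (x + y)) == 1.
    by apply/eqP; apply: (mulfI Hc); rewrite mulr1 -H2.
  by rewrite -(prim_order_dvd (al_prim Hkt ht hw)) dvdn_pmul2l.
split; last by rewrite /fm th_th /r L_Li.
split.
  move=> x y; rewrite !co_th [in LHS]E.
  have [c0|cn0] := eqVneq (co r y x) 0; first by rewrite c0 !mul0r.
  have [s Hs] := half_of (Sr _ _ cn0).
  rewrite -[al t w ^+ y * al t w ^+ x]exprD Hs (al_even Hkt ht hw) -Hs.
  rewrite [w ^+ (y + x)]exprD (mulnC y x).
  transitivity (co r y x * (w ^+ y * w ^+ x) * (hs K y * (-1) ^+ s)); first by ring.
  by rewrite (sgn_eq K Hs); ring.
move=> x y; rewrite co_th => Hc.
apply: Sr; apply: contraNN Hc => /eqP ->; by rewrite mul0r.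
Qed.

Lemma fm_inj p p' : fm p = fm p' -> p = p'.
Proof.
move=> H; rewrite -(th_th p) -(th_th p'); congr th.
by rewrite -(Li_L two_nz (th p)) -(Li_L two_nz (th p')); congr Li.
Qed.

Lemma Pc_evn p : Pc k w p -> evn p.
Proof.
move=> [_ Sp] x y Hc; have := Sp _ _ Hc; rewrite Hkt => Hd.
have : (2 %| x + y)%N by apply: dvdn_trans Hd; apply: dvdn_mull.
by rewrite dvdn2.
Qed.

End Main.

Unset Implicit Arguments. Set Strict Implicit.

Theorem mainTheorem15 (K : closedFieldType) (hchar : [pchar K] =i pred0)
  (k : nat) (hk : (0 < k)%N) (hk4 : (4 %| k)%N)
  (w : K) (hw : (2 * k).-primitive_root w)
  (z : K) (hz : (2 * k).-primitive_root z) :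
  exists f : {poly {poly K}} -> {poly {poly K}},
    alg_iso_on (@skew_mul K) (@comm_mul K)
      (is_invariant (@skew_mul K) (G_gens 1 k w))
      (is_invariant (@comm_mul K) (cyc_gens (k + 1) z)) f.
Proof.
case/dvdnP: hk4 => t Hkt.
have ht : (0 < t)%N by move: hk; rewrite Hkt; lia.
have two_nz : (2%:R : K) != 0 by rewrite ((pcharf0P K).1 hchar 2).
exists (@fm K).
split.
- move=> p Hp; apply: (Qc_Q Hkt ht hw hz).
  exact: (Pc_Qc two_nz Hkt ht hw hz (P_Pc hw Hp)).
- move=> q Hq.
  have [H1 H2] := Qc_Pc two_nz Hkt ht hw hz (Q_Qc hz Hq).
  exists (th (Li q)) => //.
  exact: (Pc_P Hkt ht hw hz H1).
- by move=> p p' _ _ Hf; apply: (fm_inj (K:=K) two_nz Hf).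
split.
- by move=> p p' _ _; rewrite /fm thD /L ev2D.
- move=> p p' Hp Hp'.
  rewrite /fm th_mul; first by rewrite /L ev2M.
    exact: (Pc_evn Hkt (P_Pc hw Hp)).
  exact: (Pc_evn Hkt (P_Pc hw Hp')).
- by move=> c0 p0 _; rewrite /fm th_cstM /L ev2_cstM.
- by rewrite /fm th1 /L ev2_1.
Qed.
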